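(* Suppose the cost function $C$ is subadditive and valuations are arbitrary (monotone and normalized). Then the Sequential Mechanism with lexicographic tie-breaking is weakly groupstrategyproof, $1$-budget-balanced (i.e. $\sum_ip_i=C(\overrightarrow{ALG})$), and is an $n$-approximation to the social cost.
   Context: Setting. $N=\{1,\dots,n\}$ is a set of players and $M_1,\dots,M_n$ are pairwise disjoint finite sets; $M=\bigcup_i M_i$; allocations $\vec S=(S_1,\dots,S_n)$ with $S_i\subseteq M_i$ are identified with subsets of $M$. A cost function is a monotone $C:2^M\to\mathbb{R}_{\ge0}$ with $C(\emptyset)=0$; subadditive: $C(S)+C(T)\ge C(S\cup T)$. Valuations $v_i:2^{M_i}\to\mathbb{R}_{\ge0}$ are monotone with $v_i(\emptyset)=0$. Sequential Mechanism with lexicographic tie-breaking: start with $ALG_i=\emptyset$ for all $i$; for $i=1,\dots,n$ in order, set $ALG_i$ to the lexicographically first element (under a fixed order) of $\arg\max_{S\subseteq M_i}v_i(S)-[C(\overrightarrow{ALG}\cup S)-C(\overrightarrow{ALG})]$ (with $\overrightarrow{ALG}$ the current allocation of players $1,\dots,i-1$), and charge $p_i=C(ALG_1,\dots,ALG_i)-C(ALG_1,\dots,ALG_{i-1})$. Weakly groupstrategyproof: for every $K\subseteq N$ and every joint misreport by $K$ (others truthful), if $v_i(S_i)-p_i\le v_i(S'_i)-p'_i$ for all $i\in K$ then $v_j(S_j)-p_j=v_j(S'_j)-p'_j$ for some $j\in K$, where $(\vec S,\vec p)$ and $(\vec S',\vec p')$ are the outputs under truthful reports and under the misreport. Social cost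 $\pi(\vec S)=C(\vec S)+\sum_i[v_i(M_i)-v_i(S_i)]$; $n$-approximation: $\pi(\overrightarrow{ALG})\le n\min_{\vec S}\pi(\vec S)$ for all profiles. *)

(* Defs.v *)
From HB Require Import structures.
From mathcomp Require Import all_boot all_order all_algebra.
Set Implicit Arguments. Unset Strict Implicit. Unset Printing Implicit Defensive.
Import Order.TTheory GRing.Theory Num.Theory.
Local Open Scope ring_scope.

(* Items form a finite type T; [own x] is the player owning item x, so
   M_i = [set x | own x == i]; the M_i are pairwise disjoint and cover T = M.
   Allocations are subsets of T. *)
Section Mechanism.
Variables (R : realFieldType) (T : finType) (n : nat) (own : T -> 'I_n).
Variable C : {set T} -> R.

Definition Mset (i : 'I_n) : {set T} := [set x | own x == i].

Definition cost_function : Prop :=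
  [/\ C set0 = 0, (forall S, 0 <= C S) &
      (forall S S' : {set T}, S \subset S' -> C S <= C S')].

Definition subadditive : Prop :=
  forall S S' : {set T}, C (S :|: S') <= C S + C S'.

Definition valuation (i : 'I_n) (v : {set T} -> R) : Prop :=
  [/\ v set0 = 0, (forall S : {set T}, S \subset Mset i -> 0 <= v S) &
      (forall S S' : {set T}, S \subset S' -> S' \subset Mset i -> v S <= v S')].

Variable ord : 'I_n -> seq {set T}.

Definition tiebreak_order : Prop :=
  forall i, perm_eq (ord i) (enum (powerset (Mset i))).

Definition mutil (b : 'I_n -> {set T} -> R) (i : 'I_n) (A S : {set T}) : R :=
  b i S - (C (A :|: S) - C A).

Definition maxers (b : 'I_n -> {set T} -> R) (i : 'I_n) (A : {set T}) : {set {set T}} :=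
  [set S : {set T} | (S \subset Mset i) &&
     [forall S' : {set T}, (S' \subset Mset i) ==> (mutil b i A S' <= mutil b i A S)]].

Definition choose_set (b : 'I_n -> {set T} -> R) (i : 'I_n) (A : {set T}) : {set T} :=
  head set0 [seq S <- ord i | S \in maxers b i A].

(* allocation of players 0, ..., k-1 *)
Fixpoint prefix (b : 'I_n -> {set T} -> R) (k : nat) : {set T} :=
  match k with
  | 0 => set0
  | k'.+1 =>
      let A := prefix b k' in
      A :|: (if insub k' is Some i then choose_set b i A else set0)
  end.

Definition ALGi b (i : 'I_n) : {set T} := choose_set b i (prefix b i).
Definition price b (i : 'I_n) : R :=
  C (prefix b i :|: ALGi b i) - C (prefix b i).
Definition ALG b : {set T} := prefix b n.

Definition social_cost (v : 'I_n -> {set T} -> R) (S : {set T}) : R :=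
  C S + \sum_(i < n) (v i (Mset i) - v i (S :&: Mset i)).

Definition utility (v b : 'I_n -> {set T} -> R) (i : 'I_n) : R :=
  v i (ALGi b i) - price b i.

Definition weakly_gsp (v : 'I_n -> {set T} -> R) : Prop :=
  forall (K : {set 'I_n}) (b : 'I_n -> {set T} -> R),
    K != set0 ->
    (forall j, j \notin K -> b j =1 v j) ->
    (forall j, j \in K -> valuation j (b j)) ->
    (forall i, i \in K -> utility v v i <= utility v b i) ->
    exists2 j, j \in K & utility v v j = utility v b j.

End Mechanism.

(* Main.v *)
Require Import Defs.
From HB Require Import structures.
From mathcomp Require Import all_boot all_order all_algebra.
From mathcomp Require Import lra.
Import Order.TTheory GRing.Theory Num.Theory.
Local Open Scope ring_scope.

Section Proofs.
Variables (R : realFieldType) (T : finType) (n : nat) (own : T -> 'I_n).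
Variables (C : {set T} -> R) (ord : 'I_n -> seq {set T}).

Lemma choose_sub b i A : choose_set own C ord b i A \subset Mset own i.
Proof.
rewrite /choose_set; case E: [seq S <- ord i | S \in maxers own C b i A] => [|S s] /=.
  exact: sub0set.
have : S \in [seq S <- ord i | S \in maxers own C b i A] by rewrite E mem_head.
by rewrite mem_filter inE => /andP[/andP[]].
Qed.

Lemma choose_max b i A : tiebreak_order own ord ->
  forall S' : {set T}, S' \subset Mset own i ->
  mutil C b i A S' <= mutil C b i A (choose_set own C ord b i A).
Proof.
move=> tb.
have P0 : set0 \in powerset (Mset own i) by rewrite powersetE sub0set.
case: (arg_maxP (fun S => mutil C b i A S) P0) => S0.
move=> S0sub S0max.
have S0s : S0 \subset Mset own i by rewrite -powersetE.
have S0in : S0 \in maxers own C b i A.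
  rewrite inE S0s /=; apply/forallP => S'; apply/implyP => HS'.
  by apply: S0max; change (S' \in powerset (Mset own i)); rewrite powersetE.
have : S0 \in [seq S <- ord i | S \in maxers own C b i A].
  by rewrite mem_filter S0in (perm_mem (tb i)) mem_enum powersetE.
rewrite /choose_set; case E: [seq S <- ord i | S \in maxers own C b i A] => [|S s] //= _.
have : S \in [seq S <- ord i | S \in maxers own C b i A] by rewrite E mem_head.
rewrite mem_filter inE => /andP[/andP[_ /forallP H] _] S' HS'.
by have /implyP := H S'; apply.
Qed.

Lemma prefix_succ b (i : 'I_n) :
  Defs.prefix own C ord b i.+1 = Defs.prefix own C ord b i :|: ALGi own C ord b i.
Proof. by rewrite /= valK. Qed.

Lemma choose_ext b b' i A : b i =1 b' i ->
  choose_set own C ord b i A = choose_set own C ord b' i A.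
Proof.
move=> H; rewrite /choose_set; congr head; apply: eq_filter => S.
have -> : maxers own C b i A = maxers own C b' i A.
  apply/setP => S'; rewrite !inE /mutil H; congr (_ && _).
  by apply: eq_forallb => S''; rewrite H.
by [].
Qed.

Lemma prefix_meet b k (i : 'I_n) :
  Defs.prefix own C ord b k :&: Mset own i =
  if (i < k)%N then ALGi own C ord b i else set0.
Proof.
elim: k => [|k IH] /=; first by rewrite set0I.
rewrite setIUl IH.
case: insubP => [j _ ej|].
  rewrite -ej -/(ALGi own C ord b j).
  case: (eqVneq i j) => [->|ne].
    rewrite ltnn ltnSn set0U; apply/setIidPl; exact: choose_sub.
  have -> : (i < j.+1)%N = (i < j)%N.
    by rewrite ltnS leq_eqVlt (_ : (val i == val j) = false) //; apply/negbTE; rewrite val_eqE.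
  have -> : ALGi own C ord b j :&: Mset own i = set0.
    apply/setP => x; rewrite !inE; apply/negbTE/andP => -[Hx].
    have := subsetP (choose_sub b j _) x Hx; rewrite inE => /eqP ->.
    by rewrite eq_sym (negbTE ne).
  by rewrite setU0.
move=> Hk; rewrite set0I setU0.
have -> : (i < k.+1)%N = (i < k)%N.
  rewrite ltnS leq_eqVlt; case: eqP => //= ik.
  by move: (ltn_ord i); rewrite ik (negbTE Hk).
by [].
Qed.

End Proofs.
Arguments choose_sub {R T n} own C ord b i A.
Arguments choose_max {R T n} own C ord b i A _ S' _.
Arguments prefix_succ {R T n} own C ord b i.
Arguments choose_ext {R T n} own C ord b b' i A _.
Arguments prefix_meet {R T n} own C ord b k i.

Theorem theorem7p4 (R : realFieldType) (T : finType) (n : nat) (own : T -> 'I_n)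
  (C : {set T} -> R) (ord : 'I_n -> seq {set T}) (v : 'I_n -> {set T} -> R) :
  cost_function C -> subadditive C ->
  tiebreak_order own ord ->
  (forall i, valuation own i (v i)) ->
  [/\ weakly_gsp own C ord v,
      \sum_(i < n) price own C ord v i = C (ALG own C ord v) &
      forall S : {set T},
        social_cost own C v (ALG own C ord v) <= n%:R * social_cost own C v S].
Proof.
move=> [C0 Cge0 Cmono] Csub tb hval.
have BB : \sum_(i < n) price own C ord v i = C (ALG own C ord v).
  pose F k := C (Defs.prefix own C ord v k).
  have -> : \sum_(i < n) price own C ord v i = \sum_(i < n) (F i.+1 - F i).
    by apply: eq_bigr => i _; rewrite /F prefix_succ.
  by rewrite -(big_mkord xpredT (fun k => F k.+1 - F k)) telescope_sumr // /F /= C0 subr0.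
split => //.
- move=> K b Kn0 Hout Hin Hge.
  case/set0Pn: Kn0 => j0 j0K.
  case: (arg_minnP (fun j : 'I_n => val j) j0K) => j jK jmin.
  exists j => //.
  apply/eqP; rewrite eq_le Hge //=.
  have Hpre : forall k, (k <= j)%N ->
      Defs.prefix own C ord b k = Defs.prefix own C ord v k.
    elim=> [|k IH] Hk //=.
    rewrite IH ?(ltnW Hk) //.
    case: insubP => [i _ ei|] //.
    congr (_ :|: _); apply: (choose_ext own C ord) => S; apply: Hout; apply/negP => iK.
    by have := jmin i iK; rewrite ei leqNgt Hk.
  rewrite /utility /price /ALGi Hpre //.
  have := choose_max own C ord v j (Defs.prefix own C ord v j) tb _
            (choose_sub own C ord b j (Defs.prefix own C ord v j)).
  by rewrite /mutil.
- move=> S.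
  have Hmeet : forall i : 'I_n, ALG own C ord v :&: Mset own i = ALGi own C ord v i.
    by move=> i; rewrite /ALG prefix_meet ltn_ord.
  pose x j := v j (Mset own j) - v j (S :&: Mset own j).
  have xge0 : forall j, 0 <= x j.
    move=> j; rewrite subr_ge0 /x; case: (hval j) => _ _ vm.
    by apply: vm; [exact: subsetIr | exact: subxx].
  rewrite /social_cost -BB -big_split /=.
  have -> : n%:R * (C S + \sum_(i < n) (v i (Mset own i) - v i (S :&: Mset own i)))
      = \sum_(i < n) (C S + \sum_(j < n) x j).
    by rewrite sumr_const card_ord mulr_natl.
  apply: ler_sum => i _; rewrite Hmeet.
  set A := Defs.prefix own C ord v i.
  have Hm := choose_max own C ord v i A tb _ (subsetIr S (Mset own i)).
  move: Hm; rewrite /mutil -/(ALGi own C ord v i) => Hm.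
  have h1 : C (A :|: S :&: Mset own i) <= C A + C (S :&: Mset own i) := Csub _ _.
  have h2 : C (S :&: Mset own i) <= C S := Cmono _ _ (subsetIl _ _).
  have h3 : x i <= \sum_(j < n) x j.
    rewrite (bigD1 i) //= lerDl; apply: sumr_ge0 => k _; exact: xge0.
  rewrite /price -/A /x in h3 *.
  lra.
Qed.
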